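(* Let $k$ be a field of characteristic $\neq 2$, and let $\mathfrak g$, $u_0,u_1,u_2$ and $\mathfrak g_0,\mathfrak g_1,\mathfrak g_2$ be as in the context. For each $i=0,1,2$, the set $\{u_i\}\cup\{u_it^n,\ u_i(t')^n,\ u_i(t'')^n: n\geq 1\}$ is a $k$-basis of $\mathfrak g_i$.
   Context: $\mathcal A=k[t,t^{-1},(1-t)^{-1}]$, $t'=1-t^{-1}$, $t''=(1-t)^{-1}$, $\mathfrak g=\mathfrak{sl}_2(k)\otimes_k\mathcal A$. With $x=\begin{pmatrix}-1&2\\0&1\end{pmatrix}$, $y=\begin{pmatrix}-1&0\\-2&1\end{pmatrix}$, $z=\begin{pmatrix}1&0\\0&-1\end{pmatrix}$: $u_0=\tfrac14(z\otimes 1+x\otimes t''+y\otimes(t''-1))$, $u_1=\tfrac14(x\otimes 1+y\otimes t+z\otimes(t-1))$, $u_2=\tfrac14(y\otimes 1+z\otimes t'+x\otimes(t'-1))$. $\tau_1$ is the $\mathcal A$-linear map of $\mathfrak g$ with $\tau_1(x\otimes 1)=-x\otimes 1$, $\tau_1(y\otimes 1)=-(z\otimes t'+x\otimes(t'-1))$, $\tau_1(z\otimes 1)=x\otimes t''+y\otimes(t''-1)$; $\tau_2$ is the $\mathcal A$-linear map with $\tau_2(x\otimes 1)=y\otimes t+z\otimes(t-1)$, $\tau_2(y\otimes 1)=-y\otimes 1$, $\tau_2(z\otimes 1)=-(x\otimes t''+y\otimes(t''-1))$. Then $\mathfrak g_0=\{g:\tau_1(g)=g,\tau_2(g)=-g\}$,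 $\mathfrak g_1=\{g:\tau_1(g)=-g,\tau_2(g)=g\}$, $\mathfrak g_2=\{g:\tau_1(g)=-g,\tau_2(g)=-g\}$. *)

(* Defs.v *)
From HB Require Import structures.
From mathcomp Require Import all_boot all_order all_algebra.
Set Implicit Arguments. Unset Strict Implicit. Unset Printing Implicit Defensive.
Import Order.TTheory GRing.Theory Num.Theory.
Local Open Scope ring_scope.

(* A := k[t, t^-1, (1-t)^-1], realised as the subring of K of elements
        p / (t^m (1-t)^n), p in k[t].
   g := sl_2(k) (x) A, realised (as usual, A being a free k-module) as
        sl_2(A) = traceless 2x2 matrices with entries in A, inside 'M[K]_2.
        The pure tensor X (x) a is  a *: X. *)
Section Setup.
Variable k : fieldType.

Definition Kf := {fraction {poly k}}.
Definition emb (p : {poly k}) : Kf := @FracField.tofrac {poly k} p.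
Definition kK (c : k) : Kf := emb (c%:P).

Definition tt : Kf := emb 'X.
Definition tt' : Kf := 1 - tt^-1.
Definition tt'' : Kf := (1 - tt)^-1.

Definition inA (a : Kf) : Prop :=
  exists (p : {poly k}) (m n : nat), a = emb p / (tt ^+ m * (1 - tt) ^+ n).

Definition mx2 (a b c d : Kf) : 'M[Kf]_2 :=
  \matrix_(i < 2, j < 2)
    if i == 0 then (if j == 0 then a else b) else (if j == 0 then c else d).

Definition xm : 'M[Kf]_2 := mx2 (-1) 2 0 1.
Definition ym : 'M[Kf]_2 := mx2 (-1) 0 (-2) 1.
Definition zm : 'M[Kf]_2 := mx2 1 0 0 (-1).

Definition ing (g : 'M[Kf]_2) : Prop :=
  \tr g = 0 /\ forall i j, inA (g i j).

(* coordinates of a traceless matrix [[a,b],[c,-a]] in the basis x, y, z: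
   g = cx g *: x + cy g *: y + cz g *: z  (needs 2 invertible) *)
Definition cx (g : 'M[Kf]_2) : Kf := g 0 1 / 2.
Definition cy (g : 'M[Kf]_2) : Kf := - (g 1 0 / 2).
Definition cz (g : 'M[Kf]_2) : Kf := g 0 0 + cx g + cy g.

Definition tau1x : 'M[Kf]_2 := - xm.
Definition tau1y : 'M[Kf]_2 := - (tt' *: zm + (tt' - 1) *: xm).
Definition tau1z : 'M[Kf]_2 := tt'' *: xm + (tt'' - 1) *: ym.
Definition tau2x : 'M[Kf]_2 := tt *: ym + (tt - 1) *: zm.
Definition tau2y : 'M[Kf]_2 := - ym.
Definition tau2z : 'M[Kf]_2 := - (tt'' *: xm + (tt'' - 1) *: ym).

Definition tau1 (g : 'M[Kf]_2) : 'M[Kf]_2 :=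
  cx g *: tau1x + cy g *: tau1y + cz g *: tau1z.
Definition tau2 (g : 'M[Kf]_2) : 'M[Kf]_2 :=
  cx g *: tau2x + cy g *: tau2y + cz g *: tau2z.

Definition gsub (i : 'I_3) (g : 'M[Kf]_2) : Prop :=
  ing g /\
  if i == 0 :> nat then tau1 g = g /\ tau2 g = - g
  else if i == 1 :> nat then tau1 g = - g /\ tau2 g = g
  else tau1 g = - g /\ tau2 g = - g.

Definition u (i : 'I_3) : 'M[Kf]_2 :=
  if i == 0 :> nat then 4^-1 *: (zm + tt'' *: xm + (tt'' - 1) *: ym)
  else if i == 1 :> nat then 4^-1 *: (xm + tt *: ym + (tt - 1) *: zm)
  else 4^-1 *: (ym + tt' *: zm + (tt' - 1) *: xm).

Definition s (j : 'I_3) : Kf :=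
  if j == 0 :> nat then tt else if j == 1 :> nat then tt' else tt''.

(* the family  {u_i} u {u_i t^n, u_i t'^n, u_i t''^n : n >= 1},
   indexed by None (u_i) and Some (j, n) (u_i * (s j)^(n+1)) *)
Definition fam (i : 'I_3) (e : option ('I_3 * nat)) : 'M[Kf]_2 :=
  match e with
  | None => u i
  | Some (j, n) => (s j ^+ n.+1) *: u i
  end.

Definition is_kbasis (I : eqType) (V : 'M[Kf]_2 -> Prop) (b : I -> 'M[Kf]_2)
  : Prop :=
  [/\ forall e, V (b e),
      forall (l : seq I) (c : I -> k), uniq l ->
        \sum_(e <- l) kK (c e) *: b e = 0 -> forall e, e \in l -> c e = 0
    & forall g, V g -> exists (l : seq I) (c : I -> k),
        g = \sum_(e <- l) kK (c e) *: b e].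

End Setup.

(* Main.v *)
Require Import Defs.
From HB Require Import structures.
From mathcomp Require Import all_boot all_order all_algebra.
From mathcomp Require Import ring lra zify.
From Stdlib Require Import Lia.
Import GRing.Theory.
Local Open Scope ring_scope.

Lemma N1 (a b c d : nat) : (a <= c)%N -> (b <= d)%N -> ((a + b).-1 <= (c + d).-1)%N.
Proof. move=> h1 h2; lia. Qed.
Lemma N1' (a b c d : nat) : (a <= d)%N -> (b <= c)%N -> ((a + b).-1 <= (c + d).-1)%N.
Proof. move=> h1 h2; lia. Qed.
Lemma N2 (a b c d : nat) : (a < c)%N -> (b <= d)%N -> (0 < d)%N -> ((a + b).-1 < (c + d).-1)%N.
Proof. move=> h1 h2 h3; lia. Qed.
Lemma N2' (a b c d : nat) : (a < d)%N -> (b <= c)%N -> (0 < c)%N -> ((a + b).-1 < (c + d).-1)%N.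
Proof. move=> h1 h2 h3; lia. Qed.
Lemma N3 (a b c d : nat) : (a <= c)%N -> (b < d)%N -> (0 < c)%N -> ((a + b).-1 < (c + d).-1)%N.
Proof. move=> h1 h2 h3; lia. Qed.

Section Generic.
Variable F : fieldType.
Implicit Types (x a b c : F).

Definition tp x := 1 - x^-1.
Definition tpp x := (1 - x)^-1.
Definition T1 x (v : F * F * F) : F * F * F :=
  let '(a, b, c) := v in (- a + b * (1 - tp x) + c * tpp x, c * (tpp x - 1), - b * tp x).
Definition T2 x (v : F * F * F) : F * F * F :=
  let '(a, b, c) := v in (- c * tpp x, a * x - b + c * (1 - tpp x), a * (x - 1)).
Definition U0 x : F * F * F := (4^-1 * tpp x, 4^-1 * (tpp x - 1), 4^-1).
Definition U1 x : F * F * F := (4^-1, 4^-1 * x, 4^-1 * (x - 1)).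
Definition U2 x : F * F * F := (4^-1 * (tp x - 1), 4^-1, 4^-1 * tp x).
Definition scv a (v : F * F * F) : F * F * F := let '(p, q, r) := v in (a * p, a * q, a * r).
Definition negv (v : F * F * F) : F * F * F := let '(p, q, r) := v in (- p, - q, - r).

Variable x : F.
Hypotheses (hx : x != 0) (hx1 : 1 - x != 0) (h2 : (2 : F) != 0).

Lemma h4 : (4 : F) != 0.
Proof. have -> : (4 : F) = 2 * 2 by ring. exact: mulf_neq0. Qed.

Lemma eig0 a : T1 x (scv a (U0 x)) = scv a (U0 x) /\ T2 x (scv a (U0 x)) = negv (scv a (U0 x)).
Proof using hx hx1 h2. rewrite /T1 /T2 /U0 /scv /negv /tp /tpp; split; congr (_, _, _); field; by rewrite ?hx ?hx1 ?h4. Qed.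

Lemma eig1 a : T1 x (scv a (U1 x)) = negv (scv a (U1 x)) /\ T2 x (scv a (U1 x)) = scv a (U1 x).
Proof using hx hx1 h2. rewrite /T1 /T2 /U1 /scv /negv /tp /tpp; split; congr (_, _, _); field; by rewrite ?hx ?hx1 ?h4. Qed.

Lemma eig2 a : T1 x (scv a (U2 x)) = negv (scv a (U2 x)) /\ T2 x (scv a (U2 x)) = negv (scv a (U2 x)).
Proof using hx hx1 h2. rewrite /T1 /T2 /U2 /scv /negv /tp /tpp; split; congr (_, _, _); field; by rewrite ?hx ?hx1 ?h4. Qed.

Lemma spn0 a b c : T1 x (a, b, c) = (a, b, c) -> T2 x (a, b, c) = negv (a, b, c) ->
  (a, b, c) = scv (4 * c) (U0 x).
Proof using hx hx1 h2.
rewrite /T1 /T2 /negv /U0 /scv => -[_ e2 _] [e1 _ _].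
have h := h4.
rewrite -e2 (_ : a = c * tpp x); last by rewrite -[a]opprK -e1; ring.
congr (_, _, _); field; by rewrite ?h.
Qed.

Lemma spn1 a b c : T1 x (a, b, c) = negv (a, b, c) -> T2 x (a, b, c) = (a, b, c) ->
  (a, b, c) = scv (4 * a) (U1 x).
Proof using hx hx1 h2.
rewrite /T1 /T2 /negv /U1 /scv => _ [_ e2 e3].
have h := h4.
have eb : b = a * x.
  apply: (mulfI h2); rewrite (_ : 2 * b = b + b) ?mulr2n //; last by ring.
  rewrite -{1}e2 -e3 /tpp; field; by rewrite ?hx1.
rewrite -e3 eb; congr (_, _, _); field; by rewrite ?h.
Qed.

Lemma spn2 a b c : T1 x (a, b, c) = negv (a, b, c) -> T2 x (a, b, c) = negv (a, b, c) ->
  (a, b, c) = scv (4 * b) (U2 x).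
Proof using hx hx1 h2.
rewrite /T1 /T2 /negv /U2 /scv => -[_ _ e3] [e1 _ _].
have h := h4.
have ec : c = b * tp x by rewrite -[c]opprK -e3; ring.
have ea : a = c * tpp x by rewrite -[a]opprK -e1; ring.
rewrite ea ec /tp /tpp; congr (_, _, _); field; by rewrite ?h ?hx ?hx1.
Qed.

Lemma rel1 : x * tp x = x - 1.
Proof using hx. rewrite /tp; field; by rewrite ?hx. Qed.
Lemma rel2 : tp x * tpp x = tp x - 1.
Proof using hx hx1. rewrite /tp /tpp; field; by rewrite ?hx ?hx1. Qed.
Lemma rel3 : tpp x * x = tpp x - 1.
Proof using hx1. rewrite /tpp; field; by rewrite ?hx1. Qed.
Lemma tpE : tp x = (x - 1) / x.
Proof using hx. rewrite /tp; field; by rewrite ?hx. Qed.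
Lemma tpVE : (tp x)^-1 = x / (x - 1).
Proof using hx hx1. rewrite /tp; field; rewrite ?hx //=.
have -> : x - 1 = - (1 - x) by ring.
by rewrite oppr_eq0 hx1.
Qed.
Lemma rearr0 a b c d : a + b + c + d = 0 -> b = - (a + c + d).
Proof. move=> e; apply/eqP; rewrite -subr_eq0 opprK -e; apply/eqP; ring. Qed.
Lemma rearr1 a b c d : a + b + c + d = 0 -> c = - (a + b + d).
Proof. move=> e; apply/eqP; rewrite -subr_eq0 opprK -e; apply/eqP; ring. Qed.
Lemma rearr2 a b c d : a + b + c + d = 0 -> d = - (a + b + c).
Proof. move=> e; apply/eqP; rewrite -subr_eq0 opprK -e; apply/eqP; ring. Qed.
End Generic.
Arguments tp {F}. Arguments tpp {F}. Arguments T1 {F}. Arguments T2 {F}.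
Arguments U0 {F}. Arguments U1 {F}. Arguments U2 {F}. Arguments scv {F}. Arguments negv {F}.
Arguments eig0 {F x}. Arguments eig1 {F x}. Arguments eig2 {F x}.
Arguments spn0 {F x}. Arguments rearr0 {F}. Arguments rearr1 {F}. Arguments rearr2 {F}. Arguments rel1 {F x}. Arguments rel2 {F x}. Arguments rel3 {F x}. Arguments tpE {F x}. Arguments tpVE {F x}. Arguments spn1 {F x}. Arguments spn2 {F x}.

Section Basics.
Variable k : fieldType.
Hypothesis hk : 2%N \notin [pchar k].

HB.instance Definition _ := GRing.RMorphism.copy (@kK k) ((@FracField.tofrac {poly k}) \o polyC).
HB.instance Definition _ := GRing.RMorphism.copy (@emb k) (@FracField.tofrac {poly k}).

Local Notation K := (Kf k).
Local Notation t := (tt k).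

Lemma two_neq0 : (2 : k) != 0.
Proof. by move: hk; rewrite inE /=. Qed.

Lemma kK_inj : injective (@kK k).
Proof. exact: fmorph_inj. Qed.

Lemma two_neq0K : (2 : K) != 0.
Proof. by rewrite -(rmorph_nat (@kK k)) fmorph_eq0 two_neq0. Qed.

Lemma emb_eq0 (p : {poly k}) : (emb p == 0) = (p == 0).
Proof. exact: tofrac_eq0. Qed.

Lemma emb_inj : injective (@emb k).
Proof. by move=> p q /eqP; rewrite /emb tofrac_eq => /eqP. Qed.

Lemma embD p q : emb (p + q) = emb p + emb q :> K. Proof. exact: rmorphD. Qed.
Lemma embB p q : emb (p - q) = emb p - emb q :> K. Proof. exact: rmorphB. Qed.
Lemma embM p q : emb (p * q) = emb p * emb q :> K. Proof. exact: rmorphM. Qed.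
Lemma embX p n : emb (p ^+ n) = emb p ^+ n :> K. Proof. exact: rmorphXn. Qed.
Lemma emb1 : emb 1 = 1 :> K. Proof. exact: rmorph1. Qed.

Lemma kKE (c : k) : kK c = emb c%:P. Proof. by []. Qed.

Lemma t_neq0 : t != 0.
Proof. by rewrite /tt emb_eq0 polyX_eq0. Qed.

Lemma omt_neq0 : 1 - t != 0.
Proof.
rewrite /tt -(rmorph1 (@emb k)) -rmorphB emb_eq0.
apply/eqP => /(congr1 (horner^~ 0)); rewrite !hornerE /= => /eqP.
by rewrite subr0 oner_eq0.
Qed.

Lemma tm1_neq0 : t - 1 != 0.
Proof. by rewrite -opprB oppr_eq0 omt_neq0. Qed.


Lemma ord2_cases (i : 'I_2) : i = 0 \/ i = 1.
Proof. by case: i => [[|[|//]]] ?; [left|right]; apply/val_inj. Qed.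

Lemma mx2_ext (M N : 'M[K]_2) : M 0 0 = N 0 0 -> M 0 1 = N 0 1 ->
  M 1 0 = N 1 0 -> M 1 1 = N 1 1 -> M = N.
Proof.
move=> h1 h2 h3 h4; apply/matrixP => i j.
by case: (ord2_cases i) => ->; case: (ord2_cases j) => ->.
Qed.

Lemma o10 : ((1 : 'I_2) == 0) = false. Proof. by []. Qed.

Lemma mx2E (a b c d : K) :
  [/\ mx2 a b c d 0 0 = a, mx2 a b c d 0 1 = b, mx2 a b c d 1 0 = c & mx2 a b c d 1 1 = d].
Proof. by rewrite /mx2 !mxE !eqxx o10. Qed.

Definition LC (a b c : K) : 'M[K]_2 := a *: xm k + b *: ym k + c *: zm k.

Lemma tr2 (M : 'M[K]_2) : \tr M = M 0 0 + M 1 1.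
Proof. rewrite /mxtrace !big_ord_recl big_ord0 addr0; have -> : lift ord0 ord0 = 1 :> 'I_2 by apply/val_inj. by []. Qed.

Lemma mx2_add a b c d a' b' c' d' :
  mx2 a b c d + mx2 a' b' c' d' = mx2 (a + a') (b + b') (c + c') (d + d') :> 'M[K]_2.
Proof.
apply/matrixP => i j; rewrite /mx2 !mxE.
by case: (ord2_cases i) => ->; case: (ord2_cases j) => ->.
Qed.

Lemma mx2_scale x a b c d :
  x *: mx2 a b c d = mx2 (x * a) (x * b) (x * c) (x * d) :> 'M[K]_2.
Proof.
apply/matrixP => i j; rewrite /mx2 !mxE.
by case: (ord2_cases i) => ->; case: (ord2_cases j) => ->.
Qed.

Lemma mx2_opp a b c d : - mx2 a b c d = mx2 (- a) (- b) (- c) (- d) :> 'M[K]_2.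
Proof.
apply/matrixP => i j; rewrite /mx2 !mxE.
by case: (ord2_cases i) => ->; case: (ord2_cases j) => ->.
Qed.

Ltac tomx2 := rewrite /LC /tau1x /tau1y /tau1z /tau2x /tau2y /tau2z /xm /ym /zm
   ?mx2_scale ?mx2_opp ?mx2_add ?mx2_scale ?mx2_opp ?mx2_add ?mx2_scale ?mx2_opp ?mx2_add.

Lemma LC_mx2 a b c : LC a b c = mx2 (- a - b + c) (2 * a) (- (2 * b)) (a + b - c).
Proof. tomx2; congr mx2; ring. Qed.

Lemma LCE (a b c : K) :
  [/\ LC a b c 0 0 = - a - b + c, LC a b c 0 1 = 2 * a, LC a b c 1 0 = - (2 * b)
   & LC a b c 1 1 = a + b - c].
Proof. rewrite LC_mx2; exact: mx2E. Qed.

Lemma LC_cx a b c : [/\ cx (LC a b c) = a, cy (LC a b c) = b & cz (LC a b c) = c].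
Proof.
have [h1 h2 h3 h4] := LCE a b c; have h := two_neq0K.
rewrite /cz /cy /cx h1 h2 h3; split; by field.
Qed.

Lemma LC_of (g : 'M[K]_2) : \tr g = 0 -> g = LC (cx g) (cy g) (cz g).
Proof.
rewrite tr2 => htr; have h := two_neq0K.
have [h1 h2 h3 h4] := LCE (cx g) (cy g) (cz g).
apply: mx2_ext; rewrite ?h1 ?h2 ?h3 ?h4 /cz /cy /cx.
- by field.
- by field.
- by field.
- have -> : g 1 1 = - g 0 0 by apply/eqP; rewrite -subr_eq0 opprK addrC htr.
  by field.
Qed.

Lemma LC_inj a b c a' b' c' : LC a b c = LC a' b' c' -> [/\ a = a', b = b' & c = c'].
Proof.
move=> e; have := LC_cx a b c; rewrite e.
by case: (LC_cx a' b' c') => -> -> -> [-> -> ->].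
Qed.

Lemma LC_scale x a b c : x *: LC a b c = LC (x * a) (x * b) (x * c).
Proof. rewrite !LC_mx2 mx2_scale; congr mx2; ring. Qed.

Lemma LC_opp a b c : - LC a b c = LC (- a) (- b) (- c).
Proof. rewrite !LC_mx2 mx2_opp; congr mx2; ring. Qed.

Lemma tau1_LC a b c : tau1 (LC a b c) =
  LC (- a + b * (1 - tt' k) + c * tt'' k) (c * (tt'' k - 1)) (- b * tt' k).
Proof. have [h1 h2 h3] := LC_cx a b c; rewrite /tau1 h1 h2 h3 LC_mx2. tomx2; congr mx2; ring. Qed.

Lemma tau2_LC a b c : tau2 (LC a b c) =
  LC (- c * tt'' k) (a * t - b + c * (1 - tt'' k)) (a * (t - 1)).
Proof. have [h1 h2 h3] := LC_cx a b c; rewrite /tau2 h1 h2 h3 LC_mx2. tomx2; congr mx2; ring. Qed.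

Lemma tr_LC a b c : \tr (LC a b c) = 0.
Proof. have [h1 h2 h3 h4] := LCE a b c; rewrite tr2 h1 h4; ring. Qed.

Lemma u0_LC : u k (0 : 'I_3) = LC (4^-1 * tt'' k) (4^-1 * (tt'' k - 1)) 4^-1.
Proof. rewrite /u /= LC_mx2; tomx2; congr mx2; ring. Qed.
Lemma u1_LC : u k (1 : 'I_3) = LC 4^-1 (4^-1 * t) (4^-1 * (t - 1)).
Proof. rewrite /u /= LC_mx2; tomx2; congr mx2; ring. Qed.
Lemma u2_LC : u k (2 : 'I_3) = LC (4^-1 * (tt' k - 1)) 4^-1 (4^-1 * tt' k).
Proof. rewrite /u /= LC_mx2; tomx2; congr mx2; ring. Qed.

Local Notation inAk := (@inA k).

Definition den (m n : nat) : K := t ^+ m * (1 - t) ^+ n.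

Lemma den_neq0 m n : den m n != 0.
Proof. rewrite /den; apply: mulf_neq0; apply: expf_neq0; [exact: t_neq0 | exact: omt_neq0]. Qed.

Lemma den_emb m n : den m n = emb ('X ^+ m * (1 - 'X) ^+ n).
Proof. by rewrite /den embM !embX embB emb1. Qed.

Lemma den_add m1 n1 m2 n2 : den (m1 + m2) (n1 + n2) = den m1 n1 * den m2 n2.
Proof. rewrite /den !exprD; ring. Qed.

Lemma inAE a : inAk a <-> exists p m n, a = emb p / den m n.
Proof. by []. Qed.

Lemma inA_add {x y} : inAk x -> inAk y -> inAk (x + y).
Proof.
move=> /inAE [p1 [m1 [n1 ->]]] /inAE [p2 [m2 [n2 ->]]].
apply/inAE; exists (p1 * ('X ^+ m2 * (1 - 'X) ^+ n2) + p2 * ('X ^+ m1 * (1 - 'X) ^+ n1)), (m1 + m2), (n1 + n2).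
rewrite den_add embD (embM p1) (embM p2) -!den_emb.
exact: addf_div (den_neq0 m1 n1) (den_neq0 m2 n2).
Qed.

Lemma inA_mul {x y} : inAk x -> inAk y -> inAk (x * y).
Proof.
move=> /inAE [p1 [m1 [n1 ->]]] /inAE [p2 [m2 [n2 ->]]].
apply/inAE; exists (p1 * p2), (m1 + m2), (n1 + n2).
rewrite den_add embM.
by rewrite mulf_div.
Qed.

Lemma inA_kK c : inAk (kK c).
Proof. exists c%:P, 0%N, 0%N; by rewrite !expr0 mulr1 invr1 mulr1. Qed.

Lemma inA_opp {x} : inAk x -> inAk (- x).
Proof.
move=> h; rewrite -mulN1r -(rmorph1 (@kK k)) -rmorphN; exact: inA_mul (inA_kK _) h.
Qed.

Lemma inA_sub {x y} : inAk x -> inAk y -> inAk (x - y).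
Proof. by move=> h1 h2; apply: inA_add h1 (inA_opp h2). Qed.

Lemma inA_1 : inAk 1. Proof. by rewrite -(rmorph1 (@kK k)); exact: inA_kK. Qed.

Lemma inA_t : inAk t.
Proof. exists 'X, 0%N, 0%N; by rewrite !expr0 mulr1 invr1 mulr1. Qed.

Lemma inA_tV : inAk t^-1.
Proof. exists 1, 1%N, 0%N; by rewrite emb1 expr1 expr0 mulr1 mul1r. Qed.

Lemma inA_t'' : inAk (tt'' k).
Proof. exists 1, 0%N, 1%N; by rewrite emb1 expr1 expr0 mul1r mul1r. Qed.

Lemma inA_t' : inAk (tt' k).
Proof. exact: inA_sub inA_1 inA_tV. Qed.

Lemma inA_2V : inAk 2^-1.
Proof.
by rewrite -(rmorph_nat (@kK k)) -fmorphV; exact: inA_kK.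
Qed.

Lemma inA_4V : inAk 4^-1.
Proof.
have -> : (4 : K)^-1 = 2^-1 * 2^-1.
  have h := two_neq0K; rewrite -invfM; congr (_^-1); ring.
exact: inA_mul inA_2V inA_2V.
Qed.

Lemma inA_exp {x} n : inAk x -> inAk (x ^+ n).
Proof. move=> h; elim: n => [|n ih]; first by rewrite expr0; exact: inA_1.
by rewrite exprS; apply: inA_mul. Qed.

Lemma inA_s j n : inAk (s k j ^+ n).
Proof.
apply: inA_exp; rewrite /s; case: ifP => _; first exact: inA_t.
by case: ifP => _; [exact: inA_t' | exact: inA_t''].
Qed.


Lemma inA_2 : inAk 2.
Proof. rewrite -(rmorph_nat (@kK k)); exact: inA_kK. Qed.

Lemma ing_LC a b c : inAk a -> inAk b -> inAk c -> @ing k (LC a b c).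
Proof.
move=> ha hb hc; split; first exact: tr_LC.
have [h1 h2 h3 h4] := LCE a b c.
move=> i j; case: (ord2_cases i) => ->; case: (ord2_cases j) => ->.
- by rewrite h1; apply: inA_add => //; apply: inA_sub => //; exact: inA_opp.
- by rewrite h2; apply: inA_mul => //; exact: inA_2.
- by rewrite h3; apply: inA_opp; apply: inA_mul => //; exact: inA_2.
- by rewrite h4; apply: inA_sub => //; exact: inA_add.
Qed.

Ltac inAt := repeat first [ assumption | exact: inA_t | exact: inA_tV | exact: inA_t'
  | exact: inA_t'' | exact: inA_1 | exact: inA_2 | exact: inA_4V | exact: inA_2V | exact: inA_kK
  | apply: inA_add | apply: inA_mul | apply: inA_opp ].

Lemma gsub0E g : gsub (0 : 'I_3) g <-> @ing k g /\ (tau1 g = g /\ tau2 g = - g).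
Proof. by []. Qed.
Lemma gsub1E g : gsub (1 : 'I_3) g <-> @ing k g /\ (tau1 g = - g /\ tau2 g = g).
Proof. by []. Qed.
Lemma gsub2E g : gsub (2 : 'I_3) g <-> @ing k g /\ (tau1 g = - g /\ tau2 g = - g).
Proof. by []. Qed.

Lemma t'E : tt' k = 1 - t^-1. Proof. by []. Qed.
Lemma t''E : tt'' k = (1 - t)^-1. Proof. by []. Qed.




Definition LCt (v : K * K * K) : 'M[K]_2 := let '(a, b, c) := v in LC a b c.

Lemma tau1_LCt v : tau1 (LCt v) = LCt (T1 t v).
Proof. by case: v => [[a b] c]; rewrite /LCt tau1_LC. Qed.
Lemma tau2_LCt v : tau2 (LCt v) = LCt (T2 t v).
Proof. by case: v => [[a b] c]; rewrite /LCt tau2_LC. Qed.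
Lemma LCt_scale a v : a *: LCt v = LCt (scv a v).
Proof. by case: v => [[p q] r]; rewrite /LCt LC_scale. Qed.
Lemma LCt_opp v : - LCt v = LCt (negv v).
Proof. by case: v => [[p q] r]; rewrite /LCt LC_opp. Qed.
Lemma LCt_inj v w : LCt v = LCt w -> v = w.
Proof. by case: v => [[p q] r]; case: w => [[p' q'] r'] /LC_inj [-> -> ->]. Qed.
Lemma u0_LCt : u k 0 = LCt (U0 t). Proof. by rewrite u0_LC. Qed.
Lemma u1_LCt : u k 1 = LCt (U1 t). Proof. by rewrite u1_LC. Qed.
Lemma u2_LCt : u k 2 = LCt (U2 t). Proof. by rewrite u2_LC. Qed.

Lemma inA_nat n : inAk n%:R.
Proof. rewrite -(rmorph_nat (@kK k)); exact: inA_kK. Qed.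

Lemma inA_tp : inAk (tp t). Proof. exact: inA_t'. Qed.
Lemma inA_tpp : inAk (tpp t). Proof. exact: inA_t''. Qed.

Ltac inAt2 := repeat first [ assumption | exact: inA_t | exact: inA_tV | exact: inA_t' | exact: inA_tp
  | exact: inA_t'' | exact: inA_tpp | exact: inA_1 | exact: inA_nat | exact: inA_2 | exact: inA_4V | exact: inA_2V | exact: inA_kK
  | apply: inA_add | apply: inA_mul | apply: inA_opp ].

Lemma hyps : [/\ t != 0, 1 - t != 0 & (2 : K) != 0].
Proof. split; [exact: t_neq0 | exact: omt_neq0 | exact: two_neq0K]. Qed.

Lemma mem0 a : inAk a -> gsub (0 : 'I_3) (a *: u k 0).
Proof.
move=> ha; rewrite u0_LCt LCt_scale; apply/gsub0E; split.
  by rewrite /U0 /scv /LCt; apply: ing_LC; inAt2.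
have [h1 h2 h3] := hyps.
by rewrite tau1_LCt tau2_LCt LCt_opp; case: (eig0 h1 h2 h3 a) => -> ->.
Qed.

Lemma mem1 a : inAk a -> gsub (1 : 'I_3) (a *: u k 1).
Proof.
move=> ha; rewrite u1_LCt LCt_scale; apply/gsub1E; split.
  by rewrite /U1 /scv /LCt; apply: ing_LC; inAt2.
have [h1 h2 h3] := hyps.
by rewrite tau1_LCt tau2_LCt LCt_opp; case: (eig1 h1 h2 h3 a) => -> ->.
Qed.

Lemma mem2 a : inAk a -> gsub (2 : 'I_3) (a *: u k 2).
Proof.
move=> ha; rewrite u2_LCt LCt_scale; apply/gsub2E; split.
  by rewrite /U2 /scv /LCt; apply: ing_LC; inAt2.
have [h1 h2 h3] := hyps.
by rewrite tau1_LCt tau2_LCt LCt_opp; case: (eig2 h1 h2 h3 a) => -> ->.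
Qed.

Lemma ing_coords g : @ing k g -> [/\ g = LCt (cx g, cy g, cz g), inAk (cx g), inAk (cy g) & inAk (cz g)].
Proof.
move=> [htr he]; have e := LC_of _ htr.
have hx : inAk (cx g) by rewrite /cx; inAt2; exact: he.
have hy : inAk (cy g) by rewrite /cy; inAt2; exact: he.
split => //; rewrite /cz; inAt2; exact: he.
Qed.

Lemma spanA0 g : gsub (0 : 'I_3) g -> exists a, inAk a /\ g = a *: u k 0.
Proof.
move=> /gsub0E [hg [e1 e2]]; have [eg hx hy hz] := ing_coords _ hg.
have [h1 h2 h3] := hyps.
exists (4 * cz g); split; first by inAt2.
rewrite u0_LCt LCt_scale -(spn0 h1 h2 h3 (cx g) (cy g) (cz g)); first exact: eg.
  by apply: LCt_inj; rewrite -tau1_LCt -eg.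
by apply: LCt_inj; rewrite -tau2_LCt -LCt_opp -eg.
Qed.


Lemma spanA1 g : gsub (1 : 'I_3) g -> exists a, inAk a /\ g = a *: u k 1.
Proof.
move=> /gsub1E [hg [e1 e2]]; have [eg hx hy hz] := ing_coords _ hg.
have [h1 h2 h3] := hyps.
exists (4 * cx g); split; first by inAt2.
rewrite u1_LCt LCt_scale -(spn1 h1 h2 h3 (cx g) (cy g) (cz g)); first exact: eg.
  by apply: LCt_inj; rewrite -tau1_LCt -LCt_opp -eg.
by apply: LCt_inj; rewrite -tau2_LCt -eg.
Qed.

Lemma spanA2 g : gsub (2 : 'I_3) g -> exists a, inAk a /\ g = a *: u k 2.
Proof.
move=> /gsub2E [hg [e1 e2]]; have [eg hx hy hz] := ing_coords _ hg.
have [h1 h2 h3] := hyps.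
exists (4 * cy g); split; first by inAt2.
rewrite u2_LCt LCt_scale -(spn2 h1 h2 h3 (cx g) (cy g) (cz g)); first exact: eg.
  by apply: LCt_inj; rewrite -tau1_LCt -LCt_opp -eg.
by apply: LCt_inj; rewrite -tau2_LCt -LCt_opp -eg.
Qed.


Definition sc (e : option ('I_3 * nat)) : K :=
  match e with None => 1 | Some (j, n) => s k j ^+ n.+1 end.

Lemma fam_sc i e : fam k i e = sc e *: u k i.
Proof. by case: e => [[j n]|] /=; rewrite ?scale1r. Qed.

Definition Vk (x : K) : Prop :=
  exists L : seq (option ('I_3 * nat) * k), x = \sum_(p <- L) kK p.2 * sc p.1.

Lemma Vk0 : Vk 0. Proof. by exists [::]; rewrite big_nil. Qed.
Lemma VkD {x y} : Vk x -> Vk y -> Vk (x + y).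
Proof. by move=> [L1 ->] [L2 ->]; exists (L1 ++ L2); rewrite big_cat. Qed.
Lemma VkZ c {x} : Vk x -> Vk (kK c * x).
Proof.
move=> [L ->]; exists [seq (p.1, c * p.2) | p <- L]; rewrite big_map mulr_sumr.
by apply: eq_bigr => p _ /=; rewrite rmorphM mulrA.
Qed.
Lemma VkN {x} : Vk x -> Vk (- x).
Proof. by move=> h; rewrite -mulN1r -(rmorph1 (@kK k)) -rmorphN; apply: VkZ. Qed.
Lemma VkB {x y} : Vk x -> Vk y -> Vk (x - y).
Proof. by move=> h1 h2; apply: VkD h1 (VkN h2). Qed.
Lemma Vk_sc e : Vk (sc e).
Proof. by exists [:: (e, 1)]; rewrite big_cons big_nil addr0 rmorph1 mul1r. Qed.
Lemma Vk1 : Vk 1. Proof. exact: (Vk_sc None). Qed.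
Lemma Vk_kK c : Vk (kK c). Proof. by rewrite -[kK c]mulr1; apply: VkZ Vk1. Qed.
Lemma Vk_pow j n : Vk (s k j ^+ n).
Proof. by case: n => [|n]; [rewrite expr0; exact: Vk1 | exact: (Vk_sc (Some (j, n)))]. Qed.
Lemma Vk_sum (I : Type) (r : seq I) (F : I -> K) : (forall i, Vk (F i)) -> Vk (\sum_(i <- r) F i).
Proof. by move=> h; elim: r => [|a r ih]; rewrite ?big_nil ?big_cons; [exact: Vk0 | apply: VkD]. Qed.

Lemma Vk_xy (x y : K) : x * y = x - 1 -> (forall a, Vk (x ^+ a)) -> (forall b, Vk (y ^+ b)) ->
  forall a b, Vk (x ^+ a * y ^+ b).
Proof.
move=> hxy hx hy a b; elim: b a => [|b ih] a; first by rewrite expr0 mulr1.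
case: a => [|a]; first by rewrite expr0 mul1r.
rewrite !exprS mulrACA hxy mulrBl mul1r mulrA -exprS; apply: VkB; exact: ih.
Qed.

Lemma s0E : s k 0 = t. Proof. by []. Qed.
Lemma s1E : s k 1 = tp t. Proof. by []. Qed.
Lemma s2E : s k 2 = tpp t. Proof. by []. Qed.

Lemma ord3_cases (i : 'I_3) : [\/ i = 0, i = 1 | i = 2].
Proof. by case: i => [[|[|[|//]]]] ?; [constructor 1|constructor 2|constructor 3]; apply/val_inj. Qed.

Lemma Vk_ss j1 j2 a b : Vk (s k j1 ^+ a * s k j2 ^+ b).
Proof.
have [h1 h2 h3] := hyps.
have V0 := Vk_pow 0; have V1 := Vk_pow 1; have V2 := Vk_pow 2.
rewrite s0E in V0; rewrite s1E in V1; rewrite s2E in V2.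
have R1 := rel1 h1; have R2 := rel2 h1 h2; have R3 := rel3 h2.
case: (ord3_cases j1) => ->; case: (ord3_cases j2) => ->.
- by rewrite -exprD; exact: Vk_pow.
- by rewrite s0E s1E; apply: Vk_xy.
- by rewrite s0E s2E mulrC; apply: Vk_xy.
- by rewrite s0E s1E mulrC; apply: Vk_xy.
- by rewrite -exprD; exact: Vk_pow.
- by rewrite s1E s2E; apply: Vk_xy.
- by rewrite s0E s2E; apply: Vk_xy.
- by rewrite s1E s2E mulrC; apply: Vk_xy.
- by rewrite -exprD; exact: Vk_pow.
Qed.


Lemma Vk_scsc e1 e2 : Vk (sc e1 * sc e2).
Proof.
case: e1 => [[j1 n1]|]; case: e2 => [[j2 n2]|] /=; rewrite ?mul1r ?mulr1; try exact: Vk_ss.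
- exact: Vk_pow.
- exact: Vk_pow.
- exact: Vk1.
Qed.

Lemma VkM {x y} : Vk x -> Vk y -> Vk (x * y).
Proof.
move=> [L1 ->] [L2 ->]; rewrite mulr_suml; apply: Vk_sum => p1.
rewrite mulr_sumr; apply: Vk_sum => p2.
rewrite mulrACA -rmorphM; apply: VkZ; exact: Vk_scsc.
Qed.

Lemma VkX {x} n : Vk x -> Vk (x ^+ n).
Proof. move=> h; elim: n => [|n ih]; first by rewrite expr0; exact: Vk1.
by rewrite exprS; apply: VkM. Qed.

Lemma Vk_t : Vk t. Proof. by have := Vk_pow 0 1; rewrite expr1. Qed.
Lemma Vk_tV : Vk t^-1.
Proof.
have -> : t^-1 = 1 - tt' k by rewrite /tt' opprB addrC subrK.
apply: VkB; first exact: Vk1. by have := Vk_pow 1 1; rewrite expr1.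
Qed.
Lemma Vk_t'' : Vk (tt'' k). Proof. by have := Vk_pow 2 1; rewrite expr1. Qed.

Lemma Vk_emb p : Vk (emb p).
Proof.
elim/poly_ind: p => [|p c ih]; first by rewrite (rmorph0 (@emb k)); exact: Vk0.
rewrite embD embM; apply: VkD; first by apply: VkM => //; exact: Vk_t.
exact: Vk_kK.
Qed.

Lemma inA_Vk a : inAk a -> Vk a.
Proof.
move=> /inAE [p [m [n ->]]]; rewrite /den invfM -!exprVn mulrA.
apply: VkM; first (apply: VkM; first exact: Vk_emb).
- by apply: VkX; exact: Vk_tV.
- by apply: VkX; exact: Vk_t''.
Qed.


Lemma convL (I : eqType) (F : I -> 'M[K]_2) (L : seq (I * k)) :
  exists (l : seq I) (c : I -> k), uniq l /\
    \sum_(p <- L) kK p.2 *: F p.1 = \sum_(e <- l) kK (c e) *: F e.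
Proof.
elim: L => [|[e0 a] L [l [c [ul ih]]]].
  by exists [::], (fun _ => 0); rewrite !big_nil.
rewrite big_cons ih /=.
case: (boolP (e0 \in l)) => he0.
  exists l, (fun e => if e == e0 then c e + a else c e); split => //.
  rewrite (bigD1_seq e0) //= (bigD1_seq e0 he0 ul) /= eqxx rmorphD scalerDl.
  rewrite addrA (addrC (kK a *: F e0)); congr (_ + _).
  by apply: eq_bigr => e /negbTE ->.
exists (e0 :: l), (fun e => if e == e0 then a else c e); split; first by rewrite /= he0.
rewrite big_cons eqxx; congr (_ + _).
apply: eq_big_seq => e he; case: eqP => // ee; by move: he; rewrite ee (negbTE he0).
Qed.

Lemma span_gen i g : (exists a, inAk a /\ g = a *: u k i) ->
  exists (l : seq (option ('I_3 * nat))) (c : option ('I_3 * nat) -> k),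
    g = \sum_(e <- l) kK (c e) *: fam k i e.
Proof.
move=> [a [ha ->]]; have [L ->] := inA_Vk _ ha.
have [l [c [_ e]]] := convL _ (fam k i) L.
exists l, c; rewrite -e scaler_suml; apply: eq_bigr => p _.
by rewrite fam_sc scalerA.
Qed.


Section Val.
Variables (O m : K -> Prop).
Hypotheses (Ok : forall c, O (kK c)) (OD : forall x y, O x -> O y -> O (x + y))
  (OM : forall x y, O x -> O y -> O (x * y)) (mO : forall x, m x -> O x)
  (mD : forall x y, m x -> m y -> m (x + y)) (mM : forall x y, O x -> m y -> m (x * y))
  (mk : forall c, m (kK c) -> c = 0).

Lemma kK1 : kK 1 = 1 :> K. Proof. exact: rmorph1. Qed.
Lemma kK0 : kK 0 = 0 :> K. Proof. exact: rmorph0. Qed.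
Lemma kKN1 : kK (-1) = -1 :> K. Proof. by rewrite rmorphN rmorph1. Qed.

Lemma O_exp x n : O x -> O (x ^+ n).
Proof using Ok OM.
move=> h; elim: n => [|n ih]; first by rewrite expr0 -kK1; exact: Ok.
by rewrite exprS; apply: OM.
Qed.

Lemma m_expS w n : m w -> m (w ^+ n.+1).
Proof using Ok OM mO mM.
by move=> h; rewrite exprSr; apply: mM => //; apply: O_exp; apply: mO.
Qed.

Lemma mN y : m y -> m (- y).
Proof using Ok mM.
by move=> h; rewrite -mulN1r -kKN1; apply: mM.
Qed.

Lemma ON y : O y -> O (- y).
Proof using Ok OM.
by move=> h; rewrite -mulN1r -kKN1; apply: OM.
Qed.

Lemma horner_O (P : {poly k}) x : O x -> O ((map_poly (@kK k) P).[x]).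
Proof using Ok OD OM.
move=> hx; rewrite horner_coef; apply: big_ind.
- by rewrite -kK0.
- exact: OD.
- by move=> i _; rewrite coef_map; apply: OM; [exact: Ok | exact: O_exp].
Qed.

Lemma val_key (P : {poly k}) (w : K) : m w -> w != 0 ->
  O ((map_poly (@kK k) P).[w^-1]) -> (size P <= 1)%N.
Proof using Ok OD OM mO mD mM mk.
move=> hw w0 hO; rewrite leqNgt; apply/negP => hs.
set Q := map_poly (@kK k) P in hO.
have sQ : size Q = size P by rewrite size_map_poly.
set d := (size P).-1.
have sP : size P = d.+1 by rewrite /d prednK // (ltn_trans _ hs).
have d1 : (0 < d)%N by rewrite /d -ltnS -sP.
have m0 : m 0 by rewrite -(mul0r w) -kK0; apply: mM.
have E : w ^+ d * Q.[w^-1] = \sum_(i < d.+1) Q`_i * w ^+ (d - i).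
  rewrite horner_coef sQ sP mulr_sumr; apply: eq_bigr => i _.
  have hi : (i <= d)%N by rewrite -ltnS.
  rewrite -{1}(subnK hi) exprD mulrCA -mulrA exprVn mulfV; first by rewrite mulr1.
  exact: expf_neq0.
have hm : m (w ^+ d * Q.[w^-1]).
  rewrite mulrC; apply: mM => //; rewrite -(prednK d1); exact: m_expS.
rewrite E big_ord_recr /= subnn expr0 mulr1 in hm.
have hS : m (\sum_(i < d) Q`_(widen_ord (leqnSn d) i) * w ^+ (d - widen_ord (leqnSn d) i)).
  apply: big_ind => //; move=> i _ /=.
  rewrite coef_map; apply: mM; first exact: Ok.
  have -> : (d - i = (d - i).-1.+1)%N by rewrite prednK // subn_gt0.
  exact: m_expS.
have hl : m (Q`_d).
  have -> : Q`_d = (\sum_(i < d) Q`_(widen_ord (leqnSn d) i) * w ^+ (d - widen_ord (leqnSn d) i) + Q`_d) - \sum_(i < d) Q`_(widen_ord (leqnSn d) i) * w ^+ (d - widen_ord (leqnSn d) i).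
    by rewrite addrC addKr.
  by apply: mD => //; apply: mN.
rewrite coef_map in hl.
have hP : P`_d != 0.
  have : lead_coef P != 0 by rewrite lead_coef_eq0 -size_poly_gt0 sP.
  by rewrite lead_coefE sP.
by move: hP; rewrite (mk _ hl) eqxx.
Qed.

End Val.


Lemma emb_neq0 {q : {poly k}} : q != 0 -> emb q != 0 :> K.
Proof. by rewrite emb_eq0. Qed.

Definition Oi (x : K) := exists p q : {poly k}, [/\ q != 0, (size p <= size q)%N & x = emb p / emb q].
Definition mi (x : K) := exists p q : {poly k}, [/\ q != 0, (size p < size q)%N & x = emb p / emb q].

Lemma size_pos {q : {poly k}} : q != 0 -> (0 < size q)%N.
Proof. by rewrite size_poly_gt0. Qed.

Lemma Oi_k c : Oi (kK c).
Proof.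
exists c%:P, 1; split; rewrite ?oner_neq0 ?size_poly1 ?size_polyC_leq1 //.
by rewrite emb1 divr1.
Qed.

Lemma Oi_D x y : Oi x -> Oi y -> Oi (x + y).
Proof.
move=> [p1 [q1 [nq1 s1 ->]]] [p2 [q2 [nq2 s2 ->]]].
exists (p1 * q2 + p2 * q1), (q1 * q2); split; first by rewrite mulf_neq0.
- rewrite size_mul //; apply: leq_trans (size_polyD _ _) _; rewrite geq_max.
  have := size_pos nq1; have := size_pos nq2; move=> a1 a2.
  apply/andP; split; apply: leq_trans (size_polyMleq _ _) _.
  - exact: N1.
  - exact: N1'.
- by rewrite embD !embM addf_div ?emb_neq0.
Qed.

Lemma Oi_M x y : Oi x -> Oi y -> Oi (x * y).
Proof.
move=> [p1 [q1 [nq1 s1 ->]]] [p2 [q2 [nq2 s2 ->]]].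
exists (p1 * p2), (q1 * q2); split; first by rewrite mulf_neq0.
- by rewrite (size_mul nq1 nq2); apply: leq_trans (size_polyMleq _ _) _; apply: N1.
- by rewrite !embM mulf_div.
Qed.

Lemma mi_O x : mi x -> Oi x.
Proof. by move=> [p [q [h1 h2 ->]]]; exists p, q; split => //; apply: ltnW. Qed.

Lemma mi_D x y : mi x -> mi y -> mi (x + y).
Proof.
move=> [p1 [q1 [nq1 s1 ->]]] [p2 [q2 [nq2 s2 ->]]].
exists (p1 * q2 + p2 * q1), (q1 * q2); split; first by rewrite mulf_neq0.
- rewrite size_mul //; apply: leq_ltn_trans (size_polyD _ _) _; rewrite gtn_max.
  have := size_pos nq1; have := size_pos nq2; move=> a1 a2.
  apply/andP; split; apply: leq_ltn_trans (size_polyMleq _ _) _.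
  - exact: N2.
  - exact: N2'.
- by rewrite embD !embM addf_div ?emb_neq0.
Qed.

Lemma mi_M x y : Oi x -> mi y -> mi (x * y).
Proof.
move=> [p1 [q1 [nq1 s1 ->]]] [p2 [q2 [nq2 s2 ->]]].
exists (p1 * p2), (q1 * q2); split; first by rewrite mulf_neq0.
- rewrite (size_mul nq1 nq2); have := size_pos nq1; move=> a1.
  by apply: leq_ltn_trans (size_polyMleq _ _) _; apply: N3.
- by rewrite !embM mulf_div.
Qed.

Lemma mi_k c : mi (kK c) -> c = 0.
Proof.
move=> [p [q [nq sq e]]]; apply/eqP; apply: contraLR sq => c0; rewrite -leqNgt.
have : emb (c%:P * q) = emb p.
  by rewrite embM -kKE e divfK ?emb_neq0.
by move/emb_inj <-; rewrite size_Cmul.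
Qed.


Definition Op (z : k) (x : K) := exists p q : {poly k}, q.[z] != 0 /\ x = emb p / emb q.
Definition mp (z : k) (x : K) := exists p q : {poly k}, [/\ q.[z] != 0, p.[z] = 0 & x = emb p / emb q].

Lemma nz_of {q : {poly k}} {z} : q.[z] != 0 -> q != 0.
Proof. by apply: contraNneq => ->; rewrite horner0. Qed.

Lemma Op_k z c : Op z (kK c).
Proof. exists c%:P, 1; rewrite hornerC oner_neq0 emb1 divr1; by split. Qed.

Lemma Op_D z x y : Op z x -> Op z y -> Op z (x + y).
Proof.
move=> [p1 [q1 [nq1 ->]]] [p2 [q2 [nq2 ->]]].
exists (p1 * q2 + p2 * q1), (q1 * q2); split; first by rewrite hornerM mulf_neq0.
by rewrite embD !embM (addf_div _ _ (emb_neq0 (nz_of nq1)) (emb_neq0 (nz_of nq2))).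
Qed.

Lemma Op_M z x y : Op z x -> Op z y -> Op z (x * y).
Proof.
move=> [p1 [q1 [nq1 ->]]] [p2 [q2 [nq2 ->]]].
exists (p1 * p2), (q1 * q2); split; first by rewrite hornerM mulf_neq0.
by rewrite !embM mulf_div.
Qed.

Lemma mp_O z x : mp z x -> Op z x.
Proof. by move=> [p [q [h1 h2 ->]]]; exists p, q. Qed.

Lemma mp_D z x y : mp z x -> mp z y -> mp z (x + y).
Proof.
move=> [p1 [q1 [nq1 e1 ->]]] [p2 [q2 [nq2 e2 ->]]].
exists (p1 * q2 + p2 * q1), (q1 * q2); split; first by rewrite hornerM mulf_neq0.
  by rewrite hornerD !hornerM e1 e2 !mul0r addr0.
by rewrite embD !embM (addf_div _ _ (emb_neq0 (nz_of nq1)) (emb_neq0 (nz_of nq2))).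
Qed.

Lemma mp_M z x y : Op z x -> mp z y -> mp z (x * y).
Proof.
move=> [p1 [q1 [nq1 ->]]] [p2 [q2 [nq2 e2 ->]]].
exists (p1 * p2), (q1 * q2); split; first by rewrite hornerM mulf_neq0.
  by rewrite hornerM e2 mulr0.
by rewrite !embM mulf_div.
Qed.

Lemma mp_k z c : mp z (kK c) -> c = 0.
Proof.
move=> [p [q [nq ep e]]].
have : emb (c%:P * q) = emb p.
  by rewrite embM -kKE e divfK // (emb_neq0 (nz_of nq)).
move/emb_inj => e'; move: ep; rewrite -e' hornerM hornerC => /eqP.
by rewrite mulf_eq0 (negbTE nq) orbF => /eqP.
Qed.


Lemma one_k : (1 : k) != 0. Proof. exact: oner_neq0. Qed.

Lemma emb_X : emb (k:=k) 'X = t. Proof. by []. Qed.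
Lemma emb_C (c : k) : emb c%:P = kK c :> K. Proof. by []. Qed.

Lemma tp_neq0 : tp t != 0.
Proof.
have [h1 h2 _] := hyps; rewrite (tpE h1); apply: mulf_neq0; first exact: tm1_neq0.
rewrite invr_eq0; exact: h1.
Qed.

Lemma sXm1 : size ('X - 1 : {poly k}) = 2%N.
Proof. by rewrite -polyC1 size_XsubC. Qed.
Lemma s1mX : size (1 - 'X : {poly k}) = 2%N.
Proof. by rewrite -opprB size_opp sXm1. Qed.
Lemma nz1mX : (1 - 'X : {poly k}) != 0.
Proof. by rewrite -size_poly_gt0 s1mX. Qed.
Lemma nzX : ('X : {poly k}) != 0.
Proof. by rewrite polyX_eq0. Qed.

Lemma inf_tp : Oi (tp t).
Proof.
have [h1 h2 _] := hyps.
exists ('X - 1), 'X; split.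
- exact: nzX.
- by rewrite sXm1 size_polyX.
- by rewrite (tpE h1) embB emb1.
Qed.

Lemma inf_tpp : Oi (tpp t).
Proof.
exists 1, (1 - 'X); split.
- exact: nz1mX.
- by rewrite s1mX size_poly1.
- by rewrite emb1 embB emb1 emb_X div1r.
Qed.

Lemma inf_w : mi t^-1.
Proof.
exists 1, 'X; split.
- exact: nzX.
- by rewrite size_polyX size_poly1.
- by rewrite emb1 emb_X div1r.
Qed.

Lemma z0_t : Op 0 t.
Proof. exists 'X, 1; split; first by rewrite hornerC oner_neq0. by rewrite emb1 divr1. Qed.
Lemma z0_tpp : Op 0 (tpp t).
Proof.
exists 1, (1 - 'X); split; first by rewrite !hornerE subr0 oner_neq0.
by rewrite emb1 embB emb1 emb_X div1r.
Qed.
Lemma z0_w : mp 0 (tp t)^-1.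
Proof.
have [h1 h2 _] := hyps.
exists 'X, ('X - 1); split.
- by rewrite !hornerE ?sub0r ?add0r oppr_eq0 oner_neq0.
- by rewrite hornerX.
- by rewrite (tpVE h1 h2) embB emb1 emb_X.
Qed.

Lemma z1_t : Op 1 t.
Proof. exists 'X, 1; split; first by rewrite hornerC oner_neq0. by rewrite emb1 divr1. Qed.
Lemma z1_tp : Op 1 (tp t).
Proof.
have [h1 h2 _] := hyps.
exists ('X - 1), 'X; split; first by rewrite hornerX oner_neq0.
by rewrite (tpE h1) embB emb1 emb_X.
Qed.
Lemma z1_w : mp 1 (1 - t).
Proof.
exists (1 - 'X), 1; split.
- by rewrite hornerC oner_neq0.
- by rewrite !hornerE subrr.
- by rewrite emb1 divr1 embB emb1 emb_X.
Qed.

Definition c0 (l : seq (option ('I_3 * nat))) (c : option ('I_3 * nat) -> k) : k :=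
  \sum_(e <- l) match e with None => c e | Some _ => 0 end.
Definition Pj (l : seq (option ('I_3 * nat))) (c : option ('I_3 * nat) -> k) (j : 'I_3) : {poly k} :=
  \sum_(e <- l) match e with Some (j', n) => if j' == j then c e *: 'X ^+ n.+1 else 0 | None => 0 end.

Lemma h01 : ((0 : 'I_3) == 1) = false. Proof. by []. Qed.
Lemma h02 : ((0 : 'I_3) == 2) = false. Proof. by []. Qed.
Lemma h10 : ((1 : 'I_3) == 0) = false. Proof. by []. Qed.
Lemma h12 : ((1 : 'I_3) == 2) = false. Proof. by []. Qed.
Lemma h20 : ((2 : 'I_3) == 0) = false. Proof. by []. Qed.
Lemma h21 : ((2 : 'I_3) == 1) = false. Proof. by []. Qed.

Lemma decomp l c : \sum_(e <- l) kK (c e) * sc e =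
  kK (c0 l c) + (map_poly (@kK k) (Pj l c 0)).[t] + (map_poly (@kK k) (Pj l c 1)).[tp t]
   + (map_poly (@kK k) (Pj l c 2)).[tpp t].
Proof.
rewrite /c0 /Pj rmorph_sum !raddf_sum !horner_sum -!big_split /=.
apply: eq_bigr => e _; case: e => [[j n]|] /=; last first.
  by rewrite !raddf0 !horner0 !addr0 mulr1.
case: (ord3_cases j) => ->; rewrite ?eqxx ?h01 ?h02 ?h10 ?h12 ?h20 ?h21 !raddf0 !horner0
  ?addr0 add0r map_polyZ map_polyXn hornerZ hornerXn ?add0r ?addr0 //.
Qed.


Lemma pick_sum {l : seq (option ('I_3 * nat))} (F : option ('I_3 * nat) -> k) {e0} :
  uniq l -> e0 \in l -> \sum_(e <- l) (if e == e0 then F e else 0) = F e0.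
Proof.
move=> ul he; rewrite (bigD1_seq e0) //= eqxx big1 ?addr0 //.
by move=> e /negbTE ->.
Qed.

Lemma coefPj {l} c {j n} : uniq l -> Some (j, n) \in l -> (Pj l c j)`_n.+1 = c (Some (j, n)).
Proof.
move=> ul he; rewrite /Pj coef_sum -(pick_sum c ul he); apply: eq_bigr => e _.
case: e => [[j' n']|] /=; last by rewrite coef0.
case: (eqVneq (Some (j', n')) (Some (j, n))) => [[-> ->]|ne].
  by rewrite eqxx coefZ coefXn eqxx mulr1.
case: (eqVneq j' j) => [ej|nj]; last by rewrite coef0.
rewrite coefZ coefXn eqSS; case: (eqVneq n n') => [en|nn]; last by rewrite mulr0.
by move: ne; rewrite ej en eqxx.
Qed.

Lemma coefPj0 l c j : (Pj l c j)`_0 = 0.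
Proof.
rewrite /Pj coef_sum big1 // => e _; case: e => [[j' n']|] /=; last by rewrite coef0.
by case: ifP => _; rewrite ?coef0 // coefZ coefXn mulr0.
Qed.

Lemma c0E {l} c : uniq l -> None \in l -> c0 l c = c None.
Proof.
move=> ul he; rewrite /c0 -(pick_sum c ul he); apply: eq_bigr => e _.
by case: e.
Qed.

Lemma Pj0 {l c j} : (size (Pj l c j) <= 1)%N -> Pj l c j = 0.
Proof. by move=> /size1_polyC ->; rewrite coefPj0. Qed.

Lemma indep_scalar l c : uniq l -> \sum_(e <- l) kK (c e) * sc e = 0 ->
  forall e, e \in l -> c e = 0.
Proof.
move=> ul E; rewrite decomp in E.
have [h1 h2 _] := hyps.
have sz0 : (size (Pj l c 0%R) <= 1)%N.
  apply: (val_key _ _ Oi_k Oi_D Oi_M mi_O mi_D mi_M mi_k _ _ inf_w).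
  - by rewrite invr_eq0; exact: h1.
  - rewrite invrK (rearr0 _ _ _ _ E); apply: (ON _ Oi_k Oi_M).
    apply: Oi_D; first apply: Oi_D.
    + exact: Oi_k.
    + exact: (horner_O _ Oi_k Oi_D Oi_M _ _ inf_tp).
    + exact: (horner_O _ Oi_k Oi_D Oi_M _ _ inf_tpp).
have sz1 : (size (Pj l c 1%R) <= 1)%N.
  apply: (val_key _ _ (Op_k 0) (Op_D 0) (Op_M 0) (mp_O 0) (mp_D 0) (mp_M 0) (mp_k 0) _ _ z0_w).
  - by rewrite invr_eq0; exact: tp_neq0.
  - rewrite invrK (rearr1 _ _ _ _ E); apply: (ON _ (Op_k 0) (Op_M 0)).
    apply: Op_D; first apply: Op_D.
    + exact: Op_k.
    + exact: (horner_O _ (Op_k 0) (Op_D 0) (Op_M 0) _ _ z0_t).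
    + exact: (horner_O _ (Op_k 0) (Op_D 0) (Op_M 0) _ _ z0_tpp).
have sz2 : (size (Pj l c 2%R) <= 1)%N.
  apply: (val_key _ _ (Op_k 1) (Op_D 1) (Op_M 1) (mp_O 1) (mp_D 1) (mp_M 1) (mp_k 1) _ _ z1_w).
  - exact: h2.
  - rewrite -/(tpp t) (rearr2 _ _ _ _ E); apply: (ON _ (Op_k 1) (Op_M 1)).
    apply: Op_D; first apply: Op_D.
    + exact: Op_k.
    + exact: (horner_O _ (Op_k 1) (Op_D 1) (Op_M 1) _ _ z1_t).
    + exact: (horner_O _ (Op_k 1) (Op_D 1) (Op_M 1) _ _ z1_tp).
move=> e he; case: e he => [[j n]|] he.
  rewrite -(coefPj c ul he) nth_default //.
  by case: (ord3_cases j) => ->; [apply: leq_trans sz0 _ | apply: leq_trans sz1 _ | apply: leq_trans sz2 _].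
rewrite (Pj0 sz0) (Pj0 sz1) (Pj0 sz2) !raddf0 !horner0 !addr0 in E.
by rewrite -(c0E c ul he); apply: kK_inj; rewrite E kK0.
Qed.


Lemma inA_sc e : inAk (sc e).
Proof. case: e => [[j n]|] /=; [exact: inA_s | exact: inA_1]. Qed.

Lemma coords0 : [/\ cx (0 : 'M[K]_2) = 0, cy (0 : 'M[K]_2) = 0 & cz (0 : 'M[K]_2) = 0].
Proof. by rewrite /cz /cy /cx !mxE !mul0r oppr0 !addr0. Qed.

Lemma four_neq0 : (4 : K) != 0.
Proof. exact: (h4 _ two_neq0K). Qed.

Lemma sum_fam i l c : \sum_(e <- l) kK (c e) *: fam k i e = (\sum_(e <- l) kK (c e) * sc e) *: u k i.
Proof. rewrite scaler_suml; apply: eq_bigr => e _; by rewrite fam_sc scalerA. Qed.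

Lemma scal_u0 i a : a *: u k i = 0 -> a = 0.
Proof.
have h4' := four_neq0; have [z1 z2 z3] := coords0.
case: (ord3_cases i) => -> e.
- move: (congr1 (@cz k) e); rewrite z3 u0_LCt LCt_scale /U0 /scv /LCt; case: (LC_cx (a * (4^-1 * tpp t)) (a * (4^-1 * (tpp t - 1))) (a * 4^-1)) => _ _ ->.
  by move/eqP; rewrite mulf_eq0 invr_eq0 (negbTE h4') orbF => /eqP.
- move: (congr1 (@cx k) e); rewrite z1 u1_LCt LCt_scale /U1 /scv /LCt; case: (LC_cx (a * 4^-1) (a * (4^-1 * t)) (a * (4^-1 * (t - 1)))) => -> _ _.
  by move/eqP; rewrite mulf_eq0 invr_eq0 (negbTE h4') orbF => /eqP.
- move: (congr1 (@cy k) e); rewrite z2 u2_LCt LCt_scale /U2 /scv /LCt; case: (LC_cx (a * (4^-1 * (tp t - 1))) (a * 4^-1) (a * (4^-1 * tp t))) => _ -> _.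
  by move/eqP; rewrite mulf_eq0 invr_eq0 (negbTE h4') orbF => /eqP.
Qed.

Lemma main i : is_kbasis (@gsub k i) (@fam k i).
Proof.
split.
- move=> e; rewrite fam_sc; have ha := inA_sc e.
  by case: (ord3_cases i) => ->; [exact: mem0 | exact: mem1 | exact: mem2].
- move=> l c ul E; apply: indep_scalar => //; apply: (@scal_u0 i); by rewrite -sum_fam.
- move=> g hg; apply: span_gen.
  by move: hg; case: (ord3_cases i) => ->; [exact: spanA0 | exact: spanA1 | exact: spanA2].
Qed.

End Basics.

Theorem corollary2p2 (k : fieldType) (hk : 2%N \notin [pchar k]) (i : 'I_3) :
  is_kbasis (@gsub k i) (@fam k i).
Proof. exact: (@main k hk i). Qed.
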